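(* For all integers $n$ and $\alpha$ with $n<\alpha\le 2^{n-1}+1$, there exists a minimal $n$-state nondeterministic finite automaton accepting a prefix-free language whose equivalent minimal deterministic finite automaton has exactly $\alpha$ states. The same holds with ''prefix-free'' replaced by ''suffix-free''.
   Context: NFAs have a single initial state and a transition function $\delta:Q\times\Sigma\to 2^Q$ that may map to the empty set (no sink state is needed or counted); DFAs are complete, so a sink state is counted. A minimal $n$-state NFA is an NFA with $n$ states such that no NFA with fewer states accepts the same language. With $\Sigma^+=\Sigma^*\setminus\{\lambda\}$: $L$ is prefix-free if $y\in L$ implies $yz\notin L$ for all $z\in\Sigma^+$; suffix-free if $y\in L$ implies $xy\notin L$ for all $x\in\Sigma^+$. *)

(* Defs.v *)
From mathcomp Require Import all_boot.
Set Implicit Arguments. Unset Strict Implicit. Unset Printing Implicit Defensive.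

Definition lang (Sigma : finType) := seq Sigma -> bool.

Definition prefix_free (Sigma : finType) (L : lang Sigma) : Prop :=
  forall y z : seq Sigma, L y -> z != [::] -> ~~ L (y ++ z).

Definition suffix_free (Sigma : finType) (L : lang Sigma) : Prop :=
  forall x y : seq Sigma, L y -> x != [::] -> ~~ L (x ++ y).

Record nfa (Sigma Q : finType) := NFA {
  nfa_init : Q;
  nfa_delta : Q -> Sigma -> {set Q};
  nfa_final : {set Q} }.

Definition nfa_reach (Sigma Q : finType) (A : nfa Sigma Q) (S : {set Q})
  (w : seq Sigma) : {set Q} :=
  foldl (fun (S : {set Q}) (a : Sigma) => \bigcup_(q in S) nfa_delta A q a) S w.

Definition nfa_accept (Sigma Q : finType) (A : nfa Sigma Q) : lang Sigma :=
  fun w => [exists q in nfa_final A, q \in nfa_reach A [set nfa_init A] w].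

Definition minimal_nfa (Sigma Q : finType) (A : nfa Sigma Q) : Prop :=
  forall (Q' : finType) (B : nfa Sigma Q'),
    #|Q'| < #|Q| -> ~ (nfa_accept B =1 nfa_accept A).

(* Complete DFA (a sink state, if any, is an ordinary state and is counted). *)
Record dfa (Sigma Q : finType) := DFA {
  dfa_init : Q;
  dfa_delta : Q -> Sigma -> Q;
  dfa_final : {set Q} }.

Definition dfa_accept (Sigma Q : finType) (D : dfa Sigma Q) : lang Sigma :=
  fun w => foldl (dfa_delta D) (dfa_init D) w \in dfa_final D.

Definition min_dfa_size (Sigma : finType) (L : lang Sigma) (k : nat) : Prop :=
  (exists (Q : finType) (D : dfa Sigma Q), #|Q| = k /\ dfa_accept D =1 L) /\
  (forall (Q : finType) (D : dfa Sigma Q), dfa_accept D =1 L -> k <= #|Q|).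

(* Main.v *)
Require Import Defs.
From mathcomp Require Import all_boot zify.
Set Implicit Arguments. Unset Strict Implicit. Unset Printing Implicit Defensive.

Section Gen.
Variables (Sigma Q : finType) (A : nfa Sigma Q).

Definition acc (S : {set Q}) (z : seq Sigma) :=
  [exists q in nfa_final A, q \in nfa_reach A S z].

Lemma reach_cat S u v : nfa_reach A S (u ++ v) = nfa_reach A (nfa_reach A S u) v.
Proof. by rewrite /nfa_reach foldl_cat. Qed.

Lemma reach_cons S a w : nfa_reach A S (a :: w) = nfa_reach A (nfa_reach A S [:: a]) w.
Proof. by []. Qed.

Lemma reach_one S a : nfa_reach A S [:: a] = \bigcup_(q in S) nfa_delta A q a.
Proof. by []. Qed.

Lemma reach0 w : nfa_reach A set0 w = set0.
Proof.
elim: w => [|a w IH] //; rewrite reach_cons reach_one big_set0; exact: IH.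
Qed.

Lemma accept_cat u v : nfa_accept A (u ++ v) = acc (nfa_reach A [set nfa_init A] u) v.
Proof. by rewrite /nfa_accept /acc reach_cat. Qed.

Lemma reach_mono (S S' : {set Q}) w : S \subset S' -> nfa_reach A S w \subset nfa_reach A S' w.
Proof.
elim: w S S' => [|a w IH] S S' H //.
rewrite reach_cons [nfa_reach A S' _]reach_cons; apply: IH.
rewrite !reach_one; apply/subsetP => x /bigcupP [q qS xq].
apply/bigcupP; exists q => //; exact: (subsetP H).
Qed.

Lemma reach_ex (S : {set Q}) w p : p \in nfa_reach A S w -> exists2 q, q \in S & p \in nfa_reach A [set q] w.
Proof.
elim: w S p => [|a w IH] S p.
  by move=> pS; exists p => //; rewrite set11.
rewrite reach_cons => /IH [r]; rewrite reach_one => /bigcupP [q qS rq] pr.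
exists q => //; rewrite reach_cons.
apply: (subsetP (reach_mono _ _)) pr; rewrite sub1set reach_one.
by apply/bigcupP; exists q => //; rewrite set11.
Qed.

End Gen.

Lemma fooling (Sigma Q : finType) (A : nfa Sigma Q) (x y : Q -> seq Sigma) :
  (forall p q, nfa_accept A (x p ++ y q) = (p == q)) -> minimal_nfa A.
Proof.
move=> H Q' B ltQ eqL.
have hp : forall p, exists q' : Q', (q' \in nfa_reach B [set nfa_init B] (x p)) &&
    [exists r in nfa_final B, r \in nfa_reach B [set q'] (y p)].
  move=> p; have := H p p; rewrite eqxx -eqL /nfa_accept reach_cat.
  move=> /existsP [r /andP [rF]] /reach_ex [q' q'in rq'].
  by exists q'; rewrite q'in; apply/existsP; exists r; rewrite rF.
pose h p := xchoose (hp p).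
have hinj : injective h.
  move=> p p' E.
  have /andP [_ /existsP [r /andP [rF rin]]] := xchooseP (hp p).
  have /andP [hin _] := xchooseP (hp p').
  have : nfa_accept A (x p' ++ y p) by rewrite -eqL /nfa_accept reach_cat;
    apply/existsP; exists r; rewrite rF /=;
    apply: (subsetP (@reach_mono _ _ B _ _ _ _)) rin; rewrite sub1set -/(h p) E.
  by rewrite H => /eqP.
by have := leq_card h hinj; rewrite leqNgt ltQ.
Qed.

Lemma dfa_gen (Sigma Q : finType) (A : nfa Sigma Q) (R : {set {set Q}})
  (wd : {set Q} -> seq Sigma) (zt : Q -> seq Sigma) :
  [set nfa_init A] \in R ->
  (forall S a, S \in R -> nfa_reach A S [:: a] \in R) ->
  (forall S, S \in R -> nfa_reach A [set nfa_init A] (wd S) = S) ->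
  (forall q S, acc A S (zt q) = (q \in S)) ->
  min_dfa_size (nfa_accept A) #|R|.
Proof.
move=> hI hcl hwd hzt; split.
  pose T := {S : {set Q} | S \in R}.
  pose del (s : T) a : T := exist _ (nfa_reach A (val s) [:: a]) (hcl _ a (valP s)).
  exists T, (DFA (exist (fun S : {set Q} => S \in R) _ hI : T) del [set s : T | acc A (val s) [::]]).
  split; first by rewrite card_sig; apply: eq_card => S; rewrite inE.
  have key : forall w (s : T), val (foldl del s w) = nfa_reach A (val s) w.
    by elim=> [|a w IH] s //=; rewrite IH.
  by move=> w; rewrite /dfa_accept /= inE key.
move=> QD D eqD.
pose T := {S : {set Q} | S \in R}.
pose g (s : T) := foldl (dfa_delta D) (dfa_init D) (wd (val s)).
have ginj : injective g.
  move=> s s' E; apply: val_inj; apply/setP => q.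
  rewrite -!hzt -(hwd _ (valP s)) -(hwd _ (valP s')) -!accept_cat -!eqD.
  by rewrite /dfa_accept !foldl_cat -/(g s) -/(g s') E.
have := leq_card g ginj.
by rewrite card_sig (eq_card (B := R)) // => S; rewrite inE.
Qed.

Lemma min_gen (Sigma Q : finType) (A : nfa Sigma Q) (R : {set {set Q}})
  (wd : {set Q} -> seq Sigma) (zt : Q -> seq Sigma) :
  (forall S, S \in R -> nfa_reach A [set nfa_init A] (wd S) = S) ->
  (forall q S, acc A S (zt q) = (q \in S)) ->
  (forall q, [set q] \in R) -> minimal_nfa A.
Proof.
move=> hwd hzt hs; apply: (@fooling _ _ A (fun p => wd [set p]) zt) => p q.
by rewrite accept_cat hwd // hzt in_set1 eq_sym.
Qed.

Lemma bigcup_if (Q : finType) (S : {set Q}) p b (X : {set Q}) :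
  \bigcup_(q in S) (if (q == p) && b then X else set0) =
  if (p \in S) && b then X else set0.
Proof.
apply/setP => x; apply/bigcupP/idP.
  move=> [q qS]; case: (q =P p) => [<-|_] /=; first by rewrite qS.
  by rewrite in_set0.
case: (boolP ((p \in S) && b)) => [/andP [pS hb]|] xin; last by move: xin; rewrite /= in_set0.
by exists p => //; rewrite eqxx hb.
Qed.

Section Cons.
Variables (m : nat) (e : 'I_m.+1) (C : {set {set 'I_m.+1}}).
Hypothesis hCD : forall T, T \in C -> e \notin T.
Hypothesis hC0 : set0 \in C.
Hypothesis hCs : forall q, q != e -> [set q] \in C.
Hypothesis he : (e == ord0) || (e == ord_max).

Definition Sig := ({set 'I_m.+1} + 'I_m.+1)%type.

Definition del (q : 'I_m.+1) (a : Sig) : {set 'I_m.+1} :=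
  match a with
  | inl T => if (q == ord0) && (T \in C) then T else set0
  | inr i => if (q == i) && (i != e) then [set ord_max] else set0
  end.

Definition Aut : nfa Sig 'I_m.+1 := @NFA Sig 'I_m.+1 ord0 del [set ord_max].

Lemma reach_inl S T : nfa_reach Aut S [:: inl T] = if (ord0 \in S) && (T \in C) then T else set0.
Proof. by rewrite reach_one; exact: bigcup_if. Qed.

Lemma reach_inr S i : nfa_reach Aut S [:: inr i] = if (i \in S) && (i != e) then [set ord_max] else set0.
Proof. by rewrite reach_one; exact: bigcup_if. Qed.

Lemma accE S z : acc Aut S z = (ord_max \in nfa_reach Aut S z).
Proof.
apply/existsP/idP => [[q /andP [/set1P -> //]]|h].
by exists ord_max; rewrite /= set11 h.
Qed.

Definition R := [set e] |: C.

Lemma singR q : [set q] \in R.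
Proof.
rewrite !inE; case: (q =P e) => [->|/eqP ne]; first by rewrite eqxx.
by rewrite hCs ?orbT.
Qed.

Lemma closR S a : S \in R -> nfa_reach Aut S [:: a] \in R.
Proof.
move=> _; case: a => [T|i]; rewrite ?reach_inl ?reach_inr.
  by case: ifP => [/andP [_ TC]|_]; rewrite !inE ?TC ?hC0 orbT.
by case: ifP => _; [exact: singR | rewrite !inE hC0 orbT].
Qed.

Definition wd (S : {set 'I_m.+1}) : seq Sig :=
  if S == [set e] then (if e == ord0 then [::] else [:: inr ord0]) else [:: inl S].

Lemma wdP S : S \in R -> nfa_reach Aut [set nfa_init Aut] (wd S) = S.
Proof.
rewrite /wd !inE; case: (S =P [set e]) => [->|_] SC.
  case: (e =P ord0) => [-> //|/eqP ne0].
  rewrite reach_inr set11 eq_sym ne0 /=.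
  by move: he; rewrite (negbTE ne0) /= => /eqP ->.
by rewrite reach_inl set11 -[S \in C]orFb SC.
Qed.

Definition zt (q : 'I_m.+1) : seq Sig :=
  if q != e then [:: inr q] else if e == ord_max then [::] else [:: inl [set ord_max]].

Lemma ztP q S : acc Aut S (zt q) = (q \in S).
Proof.
rewrite accE; case: (q =P e) => [->|/eqP ne].
  rewrite /zt eqxx /=; case: (e =P ord_max) => [-> //|/eqP nem].
  have e0 : e = ord0 by move: he; rewrite (negbTE nem) orbF => /eqP.
  rewrite reach_inl hCs 1?eq_sym // andbT; rewrite e0.
  by case: (ord0 \in S); rewrite ?set11 ?inE.
rewrite /zt ne reach_inr ne andbT.
by case: (q \in S); rewrite ?set11 ?inE.
Qed.

Lemma cardR : #|R| = #|C|.+1.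
Proof.
rewrite /R cardsU1; case: (boolP ([set e] \in C)) => // /hCD.
by rewrite set11.
Qed.

Lemma Aut_dfa : min_dfa_size (nfa_accept Aut) #|C|.+1.
Proof.
rewrite -cardR; apply: (@dfa_gen _ _ Aut R wd zt).
- exact: singR.
- move=> S a; exact: closR.
- exact: wdP.
- exact: ztP.
Qed.

Lemma Aut_min : minimal_nfa Aut.
Proof. exact: (@min_gen _ _ Aut R wd zt wdP ztP singR). Qed.

Lemma reachR S w : S \in R -> nfa_reach Aut S w \in R.
Proof. by elim: w S => [|a w IH] S // SR; rewrite reach_cons; apply/IH/closR. Qed.

Lemma prefix_Aut : ord0 != ord_max :> 'I_m.+1 -> e = ord_max -> prefix_free (nfa_accept Aut).
Proof.
move=> n0f ef y [|a z] Ly // _; rewrite /nfa_accept reach_cat.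
have SR := reachR y (singR ord0).
set S := nfa_reach Aut _ y in SR Ly *.
have Sf : S = [set ord_max].
  have fS : ord_max \in S by rewrite -accE.
  move: SR; rewrite !inE => /orP [/eqP ->|SC]; first by rewrite ef.
  by move: (hCD SC); rewrite ef fS.
rewrite Sf reach_cons.
have -> : nfa_reach Aut [set ord_max] [:: a] = set0.
  case: a => [T|i]; first by rewrite reach_inl inE (negbTE n0f).
  by rewrite reach_inr inE -ef andbN.
by rewrite reach0; apply/existsP => [[q /andP [_]]]; rewrite inE.
Qed.

Lemma no0 S a : ord0 != ord_max :> 'I_m.+1 -> e = ord0 -> ord0 \notin nfa_reach Aut S [:: a].
Proof.
move=> n0f e0; case: a => [T|i]; rewrite ?reach_inl ?reach_inr.
  case: ifP => [/andP [_ /hCD]|_]; by rewrite ?e0 ?inE.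
by case: ifP => _; rewrite inE // eq_sym.
Qed.

Lemma no0w S a w : ord0 != ord_max :> 'I_m.+1 -> e = ord0 -> ord0 \notin nfa_reach Aut S (a :: w).
Proof.
move=> n0f e0; elim: w S a => [|b w IH] S a; first exact: no0.
by rewrite reach_cons; apply: IH.
Qed.

Lemma acceptE w : nfa_accept Aut w = (ord_max \in nfa_reach Aut [set ord0] w).
Proof. exact: accE. Qed.

Lemma suffix_Aut : ord0 != ord_max :> 'I_m.+1 -> e = ord0 -> suffix_free (nfa_accept Aut).
Proof.
move=> n0f e0 [|a x] y Ly // _.
case: y Ly => [|b y].
  by rewrite acceptE inE eq_sym (negbTE n0f).
case: b => [T|i]; last first.
  rewrite acceptE reach_cons reach_inr inE e0.
  by case: (i =P ord0) => [->|]; rewrite ?eqxx ?andbF /= reach0 inE.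
move=> _; rewrite acceptE reach_cat reach_cons reach_inl.
by rewrite (negbTE (no0w _ _ _ n0f e0)) /= reach0 inE.
Qed.

Lemma triv_Aut : (forall x : 'I_m.+1, x = e) ->
  prefix_free (nfa_accept Aut) /\ suffix_free (nfa_accept Aut).
Proof.
move=> all.
have L0 : forall a w, ~~ nfa_accept Aut (a :: w).
  move=> a w; rewrite /nfa_accept reach_cons.
  have -> : nfa_reach Aut [set nfa_init Aut] [:: a] = set0.
    case: a => [T|i]; rewrite ?reach_inl ?reach_inr.
      case: ifP => // /andP [_ /hCD eT]; apply/setP => x; rewrite inE.
      by apply/negbTE; rewrite (all x).
    by rewrite (all i) eqxx andbF.
  by rewrite reach0; apply/negP => /existsP [q /andP [_]]; rewrite inE.
split.
  by move=> y [|a z] Ly // _; case: y Ly => [|b y] Ly; [apply: L0 | rewrite cat_cons; apply: L0].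
by move=> [|a x] y _ //; rewrite cat_cons => _; apply: L0.
Qed.

End Cons.

Lemma card_between (X : finType) (A B : {set X}) k :
  A \subset B -> #|A| <= k <= #|B| ->
  exists C : {set X}, [/\ A \subset C, C \subset B & #|C| = k].
Proof.
move=> AB; elim: k => [|k IH] /andP [Ak kB].
  by exists A; split => //; apply/eqP; rewrite -leqn0.
case: (ltngtP #|A| k.+1) => [lt|gt|eq]; [|by rewrite ltnNge Ak in gt|by exists A].
have [C [AC CB Ck]] : exists C : {set X}, [/\ A \subset C, C \subset B & #|C| = k] by apply: IH; rewrite -ltnS lt ltnW.
have : C \proper B by rewrite properEcard CB Ck kB.
case/properP => _ [x xB xC].
exists (x |: C); split.
- exact: subset_trans AC (subsetUr _ _).
- by rewrite subUset sub1set xB CB.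
- by rewrite cardsU1 xC Ck.
Qed.

Lemma buildC m (e : 'I_m.+1) k : m.+1 <= k <= 2 ^ m ->
  exists C : {set {set 'I_m.+1}}, [/\ (forall T, T \in C -> e \notin T),
     set0 \in C, (forall q, q != e -> [set q] \in C) & #|C| = k].
Proof.
move=> hk.
pose D := [set~ e].
pose A0 := set0 |: [set [set q] | q in D].
have A0B : A0 \subset powerset D.
  apply/subsetP => T; rewrite !inE => /orP [/eqP ->|/imsetP [q qD ->]].
    by rewrite sub0set.
  by rewrite sub1set.
have cA0 : #|A0| = m.+1.
  rewrite cardsU1 card_imset; last exact: set1_inj.
  rewrite cardsC1 card_ord; case: (boolP (set0 \in _)) => // /imsetP [q _ /setP /(_ q)].
  by rewrite !inE eqxx.
have hk2 : #|A0| <= k <= #|powerset D| by rewrite cA0 card_powerset cardsC1 card_ord.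
have [C [AC CB Ck]] := card_between A0B hk2.
exists C; split => //.
- move=> T /(subsetP CB); rewrite powersetE => /subsetP TD; apply/negP => /TD.
  by rewrite !inE eqxx.
- by apply: (subsetP AC); rewrite !inE eqxx.
- move=> q qe; apply: (subsetP AC); rewrite !inE; apply/orP; right.
  by apply: imset_f; rewrite !inE.
Qed.

Lemma all_eq m : ord0 == ord_max :> 'I_m.+1 -> forall x : 'I_m.+1, x = ord0 /\ x = ord_max.
Proof.
move=> /eqP /(congr1 val) /= m0 x; split; apply: val_inj => /=; have := ltn_ord x; lia.
Qed.

Theorem mainTheorem5 :
  forall n alpha : nat, 1 <= n -> n < alpha <= 2 ^ (n - 1) + 1 ->
    (exists (Sigma Q : finType) (A : nfa Sigma Q),
        #|Q| = n /\ minimal_nfa A /\ prefix_free (nfa_accept A) /\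
        min_dfa_size (nfa_accept A) alpha) /\
    (exists (Sigma Q : finType) (A : nfa Sigma Q),
        #|Q| = n /\ minimal_nfa A /\ suffix_free (nfa_accept A) /\
        min_dfa_size (nfa_accept A) alpha).
Proof.
case=> [//|m] alpha _; rewrite subSS subn0 => /andP [h1 h2].
have hk : m.+1 <= alpha.-1 <= 2 ^ m by apply/andP; split; lia.
split.
- have [C [hCD hC0 hCs Ck]] := buildC ord_max hk.
  have he : (@ord_max m == ord0) || (@ord_max m == ord_max) by rewrite eqxx orbT.
  exists (Sig m), 'I_m.+1, (Aut ord_max C); split; first by rewrite card_ord.
  split; first exact: (Aut_min hCs he).
  split; last first.
    have -> : alpha = #|C|.+1 by lia.
    exact: (Aut_dfa hCD hC0 hCs he).
  case: (boolP (ord0 == ord_max :> 'I_m.+1)) => [/all_eq al|n0f].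
    by case: (triv_Aut hCD (fun x => (al x).2)).
  exact: (prefix_Aut hCD hC0 hCs n0f erefl).
- have [C [hCD hC0 hCs Ck]] := buildC ord0 hk.
  have he : (@ord0 m == ord0) || (@ord0 m == ord_max) by rewrite eqxx.
  exists (Sig m), 'I_m.+1, (Aut ord0 C); split; first by rewrite card_ord.
  split; first exact: (Aut_min hCs he).
  split; last first.
    have -> : alpha = #|C|.+1 by lia.
    exact: (Aut_dfa hCD hC0 hCs he).
  case: (boolP (ord0 == ord_max :> 'I_m.+1)) => [/all_eq al|n0f].
    by case: (triv_Aut hCD (fun x => (al x).1)).
  exact: (suffix_Aut hCD n0f erefl).
Qed.
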